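(* Let $G$ be a group, $n\ge2$, $X=\{x_1,\dots,x_n\}$, fix a function $X\to G$, and let $(\mathcal X_l)_{l\ge1}$ be a non-backtracking random walk on $(G,X)$ which is irreducible as a Markov chain on $\Omega$. Then $(\mathcal X_l)$ has period $2$ if and only if there exists a subgroup $H\le G$ of index $2$ such that $x_i\notin H$ for all $i=1,\dots,n$.
   Context: Let $G$ be a group, $X=\{x_1,\dots,x_n\}$ a set with $n\ge 2$, and fix a function $X\to G$; we identify each $x_i$ with its image in $G$. Let $\Omega=G\times\{\pm1,\pm2,\dots,\pm n\}$, with elements written $(g,\epsilon i)$, $g\in G$, $\epsilon=\pm1$, $i\in\{1,\dots,n\}$. A non-backtracking random walk on $(G,X)$ is a Markov chain $(\mathcal X_l)_{l\ge1}$ on $\Omega$ with transition probabilities $\mathbb P(\mathcal X_{l+1}=(g,\epsilon i)\mid \mathcal X_l=(h,\epsilon' j))=\alpha_{\epsilon' j,\epsilon i}$ if $g=hx_i^{\epsilon}$ and $\epsilon i\neq -\epsilon' j$, and $=0$ otherwise, where the $\alpha_{\epsilon' j,\epsilon i}$ are positive constants with $\sum_{\epsilon i\neq-\epsilon' j}\alpha_{\epsilon' j,\epsilon i}=1$ for each $\epsilon' j$; and with initial distribution $\mathbb P(\mathcal X_1=(g,\epsilon i))=\beta_{\epsilon i}$ if $g=x_i^{\epsilon}$ and $0$ otherwise, for positive constants $\beta_{\epsilon i}$ summing to $1$. Irreducibility and period refer to the Markov chain on the full state space $\Omega$. *)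

(* Defs.v *)
From HB Require Import structures.
From mathcomp Require Import all_boot all_order all_algebra.
From Stdlib Require Import ClassicalEpsilon.
Set Implicit Arguments. Unset Strict Implicit. Unset Printing Implicit Defensive.
Import Order.TTheory GRing.Theory Num.Theory.
Local Open Scope ring_scope.

Record grp := Grp {
  gcarrier :> Type;
  gmul : gcarrier -> gcarrier -> gcarrier;
  gone : gcarrier;
  ginv : gcarrier -> gcarrier;
  gmulA : forall a b c, gmul a (gmul b c) = gmul (gmul a b) c;
  gmul1 : forall a, gmul gone a = a;
  gmulV : forall a, gmul (ginv a) a = gone
}.

(* Subgroups as predicates, and "index 2": exactly two left cosets,
   i.e. some a not in H with G = H u aH. *)
Definition subgroup (G : grp) (H : G -> Prop) : Prop :=
  H (gone G) /\ (forall a b, H a -> H b -> H (gmul a b)) /\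
  (forall a, H a -> H (ginv a)).

Definition index_two (G : grp) (H : G -> Prop) : Prop :=
  exists a : G, ~ H a /\ forall g : G, H g \/ H (gmul (ginv a) g).

(* Signed letters eps*i : (eps, i) with eps = true for +1, false for -1,
   and i : 'I_n standing for the index i+1 in {1..n}. *)
Definition letter (n : nat) : finType := (bool * 'I_n)%type.
Definition lopp n (a : letter n) : letter n := (~~ a.1, a.2).

Definition lval (G : grp) n (x : 'I_n -> G) (a : letter n) : G :=
  if a.1 then x a.2 else ginv (x a.2).

Definition state (G : grp) n := (gcarrier G * letter n)%type.

Definition pdec (P : Prop) : bool :=
  if excluded_middle_informative P then true else false.

Definition nbrw_P (R : realFieldType) (G : grp) n (x : 'I_n -> G)
  (alpha : letter n -> letter n -> R) (u v : state G n) : R :=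
  if pdec (v.1 = gmul u.1 (lval x v.2)) && (v.2 != lopp u.2)
  then alpha u.2 v.2 else 0.

(* Positivity of k-step transition probabilities P^k(u,v) > 0, expressed
   as existence of a path of length k with positive one-step probabilities. *)
Fixpoint nstep_pos (S : Type) (R : realFieldType) (P : S -> S -> R)
  (k : nat) (u v : S) : Prop :=
  match k with
  | 0 => u = v
  | k'.+1 => exists w, 0 < P u w /\ nstep_pos P k' w v
  end.

Definition irreducible (S : Type) (R : realFieldType) (P : S -> S -> R) : Prop :=
  forall u v : S, exists k, nstep_pos P k u v.

Definition is_gcd_of (A : nat -> Prop) (d : nat) : Prop :=
  (forall k, A k -> (d %| k)%N) /\
  (forall e, (forall k, A k -> (e %| k)%N) -> (e %| d)%N).

Definition state_period (S : Type) (R : realFieldType) (P : S -> S -> R)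
  (u : S) (d : nat) : Prop :=
  is_gcd_of (fun k => (0 < k)%N /\ nstep_pos P k u u) d.

Definition has_period (S : Type) (R : realFieldType) (P : S -> S -> R)
  (d : nat) : Prop := forall u : S, state_period P u d.

(* Main.v *)
Require Import Defs.
From HB Require Import structures.
From mathcomp Require Import all_boot all_order all_algebra.
From Stdlib Require Import ClassicalEpsilon.
Import Order.TTheory GRing.Theory Num.Theory.
Local Open Scope ring_scope.

Section Aux.
Local Open Scope nat_scope.
Set Implicit Arguments. Unset Strict Implicit.

Lemma mulgV {G : grp} (a : G) : gmul a (ginv a) = gone G.
Proof.
rewrite -[gmul a (ginv a)]gmul1 -{1}(gmulV (ginv a)) -gmulA.
by rewrite (gmulA (ginv a) a (ginv a)) gmulV gmul1 gmulV.
Qed.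

Lemma mulg1 {G : grp} (a : G) : gmul a (gone G) = a.
Proof. by rewrite -(gmulV a) gmulA mulgV gmul1. Qed.

Lemma invgK {G : grp} (a : G) : ginv (ginv a) = a.
Proof.
by rewrite -[ginv (ginv a)]mulg1 -(gmulV a) gmulA gmulV gmul1.
Qed.

Lemma inv_uniq {G : grp} (c d : G) : gmul c d = gone G -> c = ginv d.
Proof.
move=> H; by rewrite -[c]mulg1 -(mulgV d) gmulA H gmul1.
Qed.

Lemma invMg {G : grp} (a b : G) : ginv (gmul a b) = gmul (ginv b) (ginv a).
Proof.
symmetry; apply: inv_uniq.
by rewrite -gmulA (gmulA (ginv a)) gmulV gmul1 gmulV.
Qed.

Lemma pdecT (P : Prop) : P -> pdec P = true.
Proof. by rewrite /pdec; case: excluded_middle_informative. Qed.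
Lemma pdecF (P : Prop) : ~ P -> pdec P = false.
Proof. by rewrite /pdec; case: excluded_middle_informative. Qed.
Lemma pdecP (P : Prop) : pdec P -> P.
Proof. by rewrite /pdec; case: excluded_middle_informative. Qed.

Lemma nstep_cat (S : Type) (R : realFieldType) (P : S -> S -> R) k1 k2 u v w :
  nstep_pos P k1 u v -> nstep_pos P k2 v w -> nstep_pos P (k1 + k2) u w.
Proof.
elim: k1 u => [|k IH] u /=; first by move=> ->.
move=> [w' [Hw Hk]] H2; exists w'; split => //; exact: IH Hk H2.
Qed.

Lemma nstep_snoc (S : Type) (R : realFieldType) (P : S -> S -> R) k u v w :
  nstep_pos P k u v -> (0 < P v w)%R -> nstep_pos P k.+1 u w.
Proof.
move=> H1 H2; rewrite -addn1; apply: nstep_cat H1 _; by exists w.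
Qed.

Lemma P_inv (R : realFieldType) (G : grp) n (x : 'I_n -> G)
  (alpha : letter n -> letter n -> R) u v :
  (0 < nbrw_P x alpha u v)%R -> v.1 = gmul u.1 (lval x v.2).
Proof.
rewrite /nbrw_P; case E: (pdec _) => /=; last by rewrite ltxx.
by move=> _; apply: pdecP; rewrite E.
Qed.

Lemma P_step (R : realFieldType) (G : grp) n (x : 'I_n -> G)
  (alpha : letter n -> letter n -> R)
  (Halpha_pos : forall a b : letter n, b != lopp a -> (0 < alpha a b)%R)
  (u : state G n) b : b != lopp u.2 ->
  (0 < nbrw_P x alpha u (gmul u.1 (lval x b), b))%R.
Proof.
move=> Hb; rewrite /nbrw_P /= pdecT // Hb /=; exact: Halpha_pos.
Qed.

Lemma path_par (R : realFieldType) (G : grp) n (x : 'I_n -> G)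
  (alpha : letter n -> letter n -> R) (s : G -> bool)
  (Hs : forall h b, s (gmul h (lval x b)) = ~~ s h) k u v :
  nstep_pos (nbrw_P x alpha) k u v -> s v.1 = s u.1 (+) odd k.
Proof.
elim: k u => [|k IH] u /=; first by move=> ->; rewrite addbF.
move=> [w [Hw Hk]]; rewrite (IH w Hk) (P_inv Hw) Hs.
by case: (s u.1); case: (odd k).
Qed.

Lemma lopp_ne n (s : bool) (j : 'I_n) (c : letter n) :
  (s == c.1) || (j != c.2) -> (s, j) != lopp c.
Proof.
case: c => s2 i2 /=; rewrite /lopp /= xpair_eqE.
by case: s; case: s2 => //= /negbTE ->; rewrite andbF.
Qed.

Lemma modS1 a b e : a = b %[mod e] -> a.+1 = b.+1 %[mod e].
Proof. move=> Hab; by rewrite -(addn1 a) -(addn1 b) -modnDml Hab modnDml. Qed.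

Lemma rho_exists (R : realFieldType) (G : grp) (n : nat) (hn : (2 <= n)%N)
  (x : 'I_n -> G) (alpha : letter n -> letter n -> R)
  (Halpha_pos : forall a b : letter n, b != lopp a -> (0 < alpha a b)%R)
  (Hirr : irreducible (nbrw_P x alpha)) (u0 : state G n) (e : nat)
  (He : forall k, 0 < k -> nstep_pos (nbrw_P x alpha) k u0 u0 -> e %| k) :
  exists r : G -> nat, forall h b, r (gmul h (lval x b)) = (r h).+1 %[mod e].
Proof.
set P := nbrw_P x alpha.
have rhoP : forall v k1 k2, nstep_pos P k1 u0 v -> nstep_pos P k2 u0 v ->
    k1 = k2 %[mod e].
  move=> v k1 k2 H1 H2; have [r Hr] := Hirr v u0.
  have D : forall k, nstep_pos P k u0 v -> (k + r) %% e = 0.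
    move=> k Hk; have C := nstep_cat Hk Hr.
    case: (posnP (k + r)) => [->|Hp]; first by rewrite mod0n.
    by have := He _ Hp C; rewrite /dvdn => /eqP.
  apply/eqP; rewrite -(eqn_modDr r); apply/eqP; by rewrite (D _ H1) (D _ H2).
pose rho v := proj1_sig (constructive_indefinite_description _ (Hirr u0 v)).
have rhoS : forall v, nstep_pos P (rho v) u0 v.
  move=> v; exact: (proj2_sig (constructive_indefinite_description _ (Hirr u0 v))).
have step : forall v w, (0 < P v w)%R -> rho w = (rho v).+1 %[mod e].
  move=> v w Hvw; exact: rhoP (rhoS w) (nstep_snoc (rhoS v) Hvw).
have S1 : forall a b, a = b %[mod e] -> a.+1 = b.+1 %[mod e].
  move=> a b Hab; exact: (modS1 Hab).
have indep : forall (h : G) c1 c2, rho (h, c1) = rho (h, c2) %[mod e].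
  move=> h c1 c2.
  pose i0 : 'I_n := Ordinal (ltnW hn). pose i1 : 'I_n := Ordinal hn.
  pose j := if c2.2 == i0 then i1 else i0.
  have Hj : j != c2.2.
    rewrite /j; case: ifP => [/eqP ->|/negbT]; last by rewrite eq_sym.
    by apply/eqP => /(congr1 val).
  pose b : letter n := (c1.1, j).
  have B1 : b != lopp (h, c1).2 by apply: lopp_ne; rewrite eqxx.
  have B2 : b != lopp (h, c2).2 by apply: lopp_ne; rewrite Hj orbT.
  have E1 := step _ _ (P_step x Halpha_pos B1).
  have E2 := step _ _ (P_step x Halpha_pos B2).
  have : (rho (h, c1)).+1 = (rho (h, c2)).+1 %[mod e] by rewrite -E1 -E2.
  by move/eqP; rewrite -(addn1 (rho (h, c1))) -(addn1 (rho (h, c2))) eqn_modDr => /eqP.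
exists (fun h => rho (h, u0.2)) => h b.
rewrite (indep _ _ b).
have Hb : b != lopp (h, b).2 by apply: lopp_ne; rewrite eqxx.
rewrite (step _ _ (P_step x Halpha_pos Hb)) /=.
apply: S1; exact: indep.
Qed.

Lemma rho_dvd2 (G : grp) (n : nat) (hn : (2 <= n)%N) (x : 'I_n -> G) e
  (r : G -> nat) (Hr : forall h b, r (gmul h (lval x b)) = (r h).+1 %[mod e]) :
  e %| 2.
Proof.
pose i0 : 'I_n := Ordinal (ltnW hn).
have A := Hr (gmul (gone G) (lval x (true, i0))) (false, i0).
have B := modS1 (Hr (gone G) (true, i0)).
rewrite B /lval /= gmul1 mulgV in A.
have : r (gone G) + 0 = r (gone G) + 2 %[mod e] by rewrite addn0 addn2.
move/eqP; rewrite eqn_modDl mod0n => /eqP H2; by rewrite /dvdn -H2.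
Qed.

End Aux.

Theorem mainTheorem3 (R : realFieldType) (G : grp) (n : nat) (hn : (2 <= n)%N)
  (x : 'I_n -> G) (alpha : letter n -> letter n -> R) (beta : letter n -> R)
  (Halpha_pos : forall a b : letter n, b != lopp a -> 0 < alpha a b)
  (Halpha_sum : forall a : letter n, \sum_(b : letter n | b != lopp a) alpha a b = 1)
  (Hbeta_pos : forall a : letter n, 0 < beta a)
  (Hbeta_sum : \sum_(a : letter n) beta a = 1)
  (Hirr : irreducible (nbrw_P x alpha)) :
  has_period (nbrw_P x alpha) 2 <->
  exists H : G -> Prop, subgroup H /\ index_two H /\ forall i : 'I_n, ~ H (x i).
Proof.
pose i0 : 'I_n := Ordinal (ltnW hn).
split.
- move=> hP.
  pose u0 : state G n := (gone G, (true, i0)).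
  have He : forall k, (0 < k)%N -> nstep_pos (nbrw_P x alpha) k u0 u0 -> (2 %| k)%N.
    move=> k Hk Hp; exact: (hP u0).1 k (conj Hk Hp).
  have [r Hr] := rho_exists hn Halpha_pos Hirr He.
  pose s g := odd (r g).
  have Hs : forall h b, s (gmul h (lval x b)) = ~~ s h.
    move=> h b; rewrite /s; have := congr1 odd (Hr h b).
    by rewrite !odd_mod //= => ->.
  have hom : forall g h, s (gmul g h) = s g (+) (s h (+) s (gone G)).
    move=> g h; have [k Hk] := Hirr (gone G, (true, i0)) (h, (true, i0)).
    have Hs' : forall g0 h0 b, s (gmul g0 (gmul h0 (lval x b))) = ~~ s (gmul g0 h0).
      by move=> g0 h0 b; rewrite gmulA Hs.
    have A := path_par (Hs' g) Hk; have B := path_par (Hs' (gone G)) Hk.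
    rewrite /= mulg1 in A; rewrite /= !gmul1 in B.
    rewrite A B; by case: (s g); case: (s (gone G)); case: (odd k).
  have sx : forall b, s (lval x b) = ~~ s (gone G).
    by move=> b; rewrite -{1}(gmul1 (lval x b)) Hs.
  exists (fun g => s g = s (gone G)); split; [split; [|split]|split].
  + by [].
  + move=> a b Ha Hb; rewrite hom Ha Hb; by case: (s (gone G)).
  + move=> a Ha; have := hom (ginv a) a; rewrite gmulV Ha.
    by case: (s (gone G)); case: (s (ginv a)).
  + exists (x i0); split.
      by have := sx (true, i0); rewrite /lval /= => ->; case: (s (gone G)).
    move=> g; case E: (s g == s (gone G)); first by left; apply/eqP.
    right; rewrite hom; have := sx (false, i0); rewrite /lval /= => ->.
    move: E; by case: (s g); case: (s (gone G)).
  + move=> i; have := sx (true, i); rewrite /lval /= => ->; by case: (s (gone G)).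
- move=> [H [[H1 [HM HV]] [[a [Ha Hcov]] Hx]]].
  have Hl : forall b, ~ H (lval x b).
    case=> [[] i]; rewrite /lval /=; first exact: Hx.
    by move=> /HV; rewrite invgK; apply: Hx.
  pose s g := ~~ pdec (H g).
  have Hs : forall h b, s (gmul h (lval x b)) = ~~ s h.
    move=> h b; rewrite /s negbK.
    case: (excluded_middle_informative (H h)) => Hh.
    + rewrite (pdecT Hh) pdecF // => Hhy; apply: (Hl b).
      by have := HM _ _ (HV _ Hh) Hhy; rewrite gmulA gmulV gmul1.
    + rewrite (pdecF Hh) pdecT //.
      have Hp : H (gmul (ginv a) (ginv h)).
        case: (Hcov (ginv h)) => // /HV; by rewrite invgK.
      have Hq : H (gmul (ginv a) (lval x b)).
        by case: (Hcov (lval x b)) => // /Hl.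
      have := HM _ _ (HV _ Hp) Hq.
      by rewrite invMg !invgK -gmulA (gmulA a) mulgV gmul1.
  move=> u; split.
  + move=> k [Hk Hp]; have := path_par Hs Hp.
    by rewrite dvdn2; case: (s u.1); case: (odd k).
  + move=> e He.
    have [r Hr] := rho_exists hn Halpha_pos Hirr (fun k Hk Hp => He k (conj Hk Hp)).
    have HH := rho_dvd2 hn Hr; exact HH.
Qed.
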